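(* Let $\bullet$ be the empty superscript, ''$\le1$'', or ''$1$'', and let $X$ be an $\mathsf{AP}_\bullet$-friendly space. For every nonempty closed subset $A$ of $\mathbb{P}^\bullet_{\mathsf P,wk}(X)$, $s^\bullet_{\mathsf{AP}}(r_{\mathsf{AP}}(A))$ is the closed convex hull of $A$ in $\mathbb{P}^\bullet_{\mathsf P,wk}(X)$, i.e. the smallest closed convex subset of $\mathbb{P}^\bullet_{\mathsf P,wk}(X)$ containing $A$.
   Context: $\overline{\mathbb{R}}_+=[0,+\infty]$ with the Scott topology. $\mathcal{L}X$: continuous maps $X\to\overline{\mathbb{R}}_+$, pointwise order, Scott topology, cone under pointwise operations; $\mathbf 1$ constant map $1$. A prevision is a Scott-continuous $F:\mathcal{L}X\to\overline{\mathbb{R}}_+$ with $F(ah)=aF(h)$; linear if additive, Hoare if sublinear; subnormalized if $F(\mathbf 1+h)\le1+F(h)$ for all $h$, normalized if equality. $\mathbb{P}^\bullet_{\mathsf P}(X)$: linear previsions with no condition / subnormalized / normalized per $\bullet$. Subscript $wk$: weak topology generated by $[h>r]=\{G\mid G(h)>r\}$. Convex: closed under $aG+(1-a)G'$, $a\in[0,1]$. $r_{\mathsf{AP}}(A)(h)=\sup_{G\in A}G(h)$; for a Hoare prevision $F$, $s^\bullet_{\mathsf{AP}}(F)=\{G\in\mathbb{P}^\bullet_{\mathsf P}(X)\mid G\le F\}$. A semitopological cone is locally convex (resp. locally convex-compact) if each point has a base of convex open (resp. convex compact) neighbourhoods; topological if operations are jointly continuous. LCS-complete: homeomorphic to a $G_\delta$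 subspace of a locally compact sober space. $X$ is $\mathsf{AP}$-friendly ($=\mathsf{AP}_{\le1}$-friendly) iff $\mathcal{L}X$ is a locally convex semitopological cone; $\mathsf{AP}_1$-friendly iff (1) $X$ compact and $\mathsf{AP}$-friendly, or (2) $\mathcal{L}X$ is a locally convex-compact, locally convex topological cone with sober topology, or (3) $X$ is LCS-complete. *)

(* Defs.v *)
From HB Require Import structures.
From mathcomp Require Import all_boot all_order all_algebra.
From mathcomp Require Import all_classical all_reals all_analysis borel_hierarchy.
Set Implicit Arguments. Unset Strict Implicit. Unset Printing Implicit Defensive.
Import Order.TTheory GRing.Theory Num.Theory.
Import numFieldNormedType.Exports.
Local Open Scope classical_set_scope.
Local Open Scope ring_scope.

Definition open_base_with (T : Type) (sp : set T) (opn : set T -> Prop)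
  (P : set T -> Prop) :=
  forall x U, sp x -> opn U -> U x ->
    exists V, [/\ opn V, P V, V x & V `<=` U].

Definition cover_compact (T : Type) (opn : set T -> Prop) (K : set T) :=
  forall Us : set (set T), Us `<=` opn -> K `<=` \bigcup_(U in Us) U ->
    exists s : seq (set T), (forall U, U \in s -> Us U) /\
      K `<=` \bigcup_(U in [set U | U \in s]) U.

Definition compact_base_with (T : Type) (sp : set T) (opn : set T -> Prop)
  (P : set T -> Prop) :=
  forall x U, sp x -> opn U -> U x ->
    exists K, [/\ P K, cover_compact opn K, K `<=` U &
      exists V, [/\ opn V, V x & V `<=` K]].

(* sobriety of the space [sp] with open sets [opn] (opn-sets are subsets of sp) *)
Definition closed_in (T : Type) (sp : set T) (opn : set T -> Prop) (C : set T) :=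
  C `<=` sp /\ opn (sp `\` C).
Definition irreducible_closed_in (T : Type) (sp : set T) (opn : set T -> Prop)
  (C : set T) :=
  [/\ closed_in sp opn C, C !=set0 &
    forall C1 C2, closed_in sp opn C1 -> closed_in sp opn C2 ->
      C `<=` C1 `|` C2 -> C `<=` C1 \/ C `<=` C2].
Definition point_closure_in (T : Type) (sp : set T) (opn : set T -> Prop) (x : T) :=
  [set y | sp y /\ forall U, opn U -> U y -> U x].
Definition sober_in (T : Type) (sp : set T) (opn : set T -> Prop) :=
  forall C, irreducible_closed_in sp opn C ->
    exists! x, sp x /\ C = point_closure_in sp opn x.

Definition sober_space (Y : topologicalType) :=
  sober_in [set: Y] (@open Y).
Definition locally_compact_space (Y : topologicalType) :=
  forall y (U : set Y), open U -> U y ->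
    exists K V, [/\ compact K, open V, V y, V `<=` K & K `<=` U].

Definition LCS_complete (X : topologicalType) :=
  exists (Y : topologicalType) (S : set Y) (f : X -> Y),
    [/\ locally_compact_space Y, sober_space Y, Gdelta S,
        [/\ injective f, range f = S & continuous f] &
        forall U : set X, open U -> exists V : set Y, open V /\ f @` U = V `&` S].

(* The cone LX of continuous maps X -> [0,+oo] (Scott topology on the   *)
(* target, whose open sets are {}, [0,+oo] and (r,+oo]).                *)

Definition isLX (R : realType) (X : topologicalType) (h : X -> \bar R) :=
  (forall x, (0 <= h x)%E) /\ forall r : R, open [set x | (r%:E < h x)%E].

Definition pw_le (R : realType) (X : Type) (h k : X -> \bar R) :=
  forall x, (h x <= k x)%E.

Definition directed_fam (R : realType) (X : topologicalType)
  (D : set (X -> \bar R)) :=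
  [/\ D `<=` @isLX R X, D !=set0 &
    forall h k, D h -> D k -> exists l, [/\ D l, pw_le h l & pw_le k l]].

Definition pw_sup (R : realType) (X : Type) (D : set (X -> \bar R)) :=
  fun x => ereal_sup [set d x | d in D].

Definition scal (R : realType) (X : Type) (a : R) (h : X -> \bar R) :=
  fun x => (a%:E * h x)%E.
Definition padd (R : realType) (X : Type) (h k : X -> \bar R) :=
  fun x => (h x + k x)%E.

Definition scott_open (R : realType) (X : topologicalType) (U : set (X -> \bar R)) :=
  [/\ U `<=` @isLX R X,
      forall h k, U h -> isLX k -> pw_le h k -> U k &
      forall D, directed_fam D -> U (pw_sup D) -> exists d, D d /\ U d].

(* Scott-open subsets of R_+ = [0,+oo) : {} , R_+ , (r,+oo) *)
Definition scottR_open (R : realType) (O : set R) :=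
  forall a, 0 <= a -> O a -> exists r, r < a /\ forall b, 0 <= b -> r < b -> O b.

Definition LX_convex (R : realType) (X : topologicalType) (V : set (X -> \bar R)) :=
  forall h k a, V h -> V k -> 0 <= a <= 1 -> V (padd (scal a h) (scal (1 - a) k)).

Definition LX_T0 (R : realType) (X : topologicalType) :=
  forall h k, isLX h -> isLX k ->
    (forall U, @scott_open R X U -> (U h <-> U k)) -> h = k.

Definition LX_semitopological (R : realType) (X : topologicalType) :=
  [/\ @LX_T0 R X,
      forall (h : X -> \bar R) U, isLX h -> scott_open U ->
        scott_open [set k | isLX k /\ U (padd h k)],
      forall a U, 0 <= a -> scott_open U ->
        scott_open [set k | isLX k /\ U (@scal R X a k)] &
      forall h U, isLX h -> scott_open U ->
        scottR_open [set a | 0 <= a /\ U (@scal R X a h)]].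

Definition LX_topological (R : realType) (X : topologicalType) :=
  [/\ @LX_T0 R X,
      forall (h k : X -> \bar R) U, isLX h -> isLX k -> scott_open U -> U (padd h k) ->
        exists V W, [/\ scott_open V, scott_open W, V h, W k &
          forall h' k', V h' -> W k' -> U (padd h' k')] &
      forall a h U, 0 <= a -> isLX h -> scott_open U -> U (@scal R X a h) ->
        exists r V, [/\ r < a, scott_open V, V h &
          forall b k, 0 <= b -> r < b -> V k -> U (scal b k)]].

Definition LX_locally_convex (R : realType) (X : topologicalType) :=
  open_base_with (@isLX R X) (@scott_open R X) (@LX_convex R X).

Definition LX_locally_convex_compact (R : realType) (X : topologicalType) :=
  compact_base_with (@isLX R X) (@scott_open R X) (@LX_convex R X).

(* Previsions.  A prevision is a map LX -> [0,+oo]; we represent it by a  *)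
(* map F : (X -> \bar R) -> \bar R which is 0 outside LX (canonical       *)
(* extension), so that sets of previsions are sets of such maps.          *)

Definition prevision (R : realType) (X : topologicalType)
  (F : (X -> \bar R) -> \bar R) :=
  [/\ forall h, ~ isLX h -> F h = 0%E,
      forall h k, isLX h -> isLX k -> pw_le h k -> (F h <= F k)%E,
      forall D, directed_fam D -> F (pw_sup D) = ereal_sup (F @` D) &
      forall a h, 0 <= a -> isLX h -> F (@scal R X a h) = (a%:E * F h)%E].

Definition linear_prev (R : realType) (X : topologicalType) F :=
  @prevision R X F /\
  forall h k, isLX h -> isLX k -> F (padd h k) = (F h + F k)%E.

Definition hoare_prev (R : realType) (X : topologicalType) F :=
  @prevision R X F /\
  forall h k, isLX h -> isLX k -> (F (padd h k) <= F h + F k)%E.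

Definition subnormalized (R : realType) (X : topologicalType)
  (F : (X -> \bar R) -> \bar R) :=
  forall h, isLX h -> (F (fun x => 1%E + h x) <= 1%E + F h)%E.
Definition normalized (R : realType) (X : topologicalType)
  (F : (X -> \bar R) -> \bar R) :=
  forall h, isLX h -> F (fun x => 1%E + h x) = (1%E + F h)%E.

Inductive bullet := BNone | BLe1 | BOne.

Definition Pb (R : realType) (X : topologicalType) (b : bullet) F :=
  @linear_prev R X F /\
  match b with
  | BNone => True
  | BLe1 => subnormalized F
  | BOne => normalized F
  end.

(* weak topology on P^bullet_P(X): generated by the subbasic sets
   [h > r] = {G | G h > r}; a set is open iff around each of its points it
   contains a finite intersection of subbasic sets *)
Definition wk_open (R : realType) (X : topologicalType) (b : bullet)
  (U : set ((X -> \bar R) -> \bar R)) :=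
  U `<=` @Pb R X b /\
  forall G, U G -> exists s : seq ((X -> \bar R) * R),
    [/\ forall p, p \in s -> isLX p.1,
        forall p, p \in s -> (p.2%:E < G p.1)%E &
        forall G', Pb b G' -> (forall p, p \in s -> (p.2%:E < G' p.1)%E) -> U G'].

Definition wk_closed (R : realType) (X : topologicalType) (b : bullet)
  (A : set ((X -> \bar R) -> \bar R)) :=
  A `<=` @Pb R X b /\ wk_open b (@Pb R X b `\` A).

Definition prev_convex (R : realType) (X : topologicalType)
  (A : set ((X -> \bar R) -> \bar R)) :=
  forall G G' (a : R), A G -> A G' -> 0 <= a <= 1 ->
    A (fun h => (a%:E * G h + (1 - a)%:E * G' h)%E).

Definition r_AP (R : realType) (X : topologicalType)
  (A : set ((X -> \bar R) -> \bar R)) : (X -> \bar R) -> \bar R :=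
  fun h => ereal_sup [set G h | G in A].

Definition s_AP (R : realType) (X : topologicalType) (b : bullet)
  (F : (X -> \bar R) -> \bar R) : set ((X -> \bar R) -> \bar R) :=
  [set G | @Pb R X b G /\ forall h, isLX h -> (G h <= F h)%E].

Definition AP_friendly (R : realType) (X : topologicalType) :=
  @LX_semitopological R X /\ @LX_locally_convex R X.

Definition AP_friendly_b (R : realType) (X : topologicalType) (b : bullet) :=
  match b with
  | BNone | BLe1 => @AP_friendly R X
  | BOne =>
      (compact [set: X] /\ @AP_friendly R X) \/
      [/\ @LX_locally_convex_compact R X, @LX_locally_convex R X,
          @LX_topological R X & sober_in (@isLX R X) (@scott_open R X)] \/
      LCS_complete X
  end.

(* Main.v *)
Require Import Defs.
From HB Require Import structures.
From mathcomp Require Import all_boot all_order all_algebra.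
From mathcomp Require Import all_classical all_reals all_analysis borel_hierarchy.
From mathcomp Require Import ring lra.
Import Order.TTheory GRing.Theory Num.Theory.
Local Open Scope classical_set_scope.

Local Open Scope ring_scope.

Lemma key_ineq (R : realType) (up vp uq vq : R) :
  0 < up -> vp <= 0 -> uq <= 0 -> 0 < vq ->
  (forall t, 0 <= t <= 1 -> t * up + (1 - t) * uq <= 0 \/ t * vp + (1 - t) * vq <= 0) ->
  vq * up <= uq * vp.
Proof.
move=> hup hvp huq hvq H.
rewrite leNgt; apply/negP => hlt.
set A := up - uq. set B := vq - vp.
have hA : 0 < A by rewrite /A; lra.
have hB : 0 < B by rewrite /B; lra.
set iA := A^-1. set iB := B^-1.
have eA : A * iA = 1 by rewrite /iA mulfV // gt_eqF.
have eB : B * iB = 1 by rewrite /iB mulfV // gt_eqF.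
have iA0 : 0 < iA by rewrite /iA invr_gt0.
have iB0 : 0 < iB by rewrite /iB invr_gt0.
set a := - uq * iA. set b := vq * iB.
have ha : a * A = - uq by rewrite /a -mulrA (mulrC iA) eA mulr1.
have hb : b * B = vq by rewrite /b -mulrA (mulrC iB) eB mulr1.
have key : 0 < vq * A + uq * B by rewrite /A /B; nra.
have ab : a < b.
  have : 0 < (vq * A + uq * B) * (iA * iB) by apply: mulr_gt0 => //; exact: mulr_gt0.
  have -> : (vq * A + uq * B) * (iA * iB) = vq * (A * iA) * iB + uq * (B * iB) * iA by ring.
  rewrite eA eB /a /b; lra.
have a0 : 0 <= a by rewrite /a; apply: mulr_ge0 => //; [lra | exact: ltW].
have b1 : b <= 1.
  have : 0 <= (1 - b) * B.
    rewrite mulrBl mul1r hb /B; lra.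
  rewrite pmulr_lge0 //; lra.
set t := (a + b) / 2.
have ht : 0 <= t <= 1 by rewrite /t; apply/andP; split; lra.
have h1 : 0 < (t - a) * A by apply: mulr_gt0 => //; rewrite /t; lra.
have h2 : 0 < (b - t) * B by apply: mulr_gt0 => //; rewrite /t; lra.
rewrite mulrBl ha in h1. rewrite mulrBl hb in h2.
case: (H t ht).
- have -> : t * up + (1 - t) * uq = uq + t * A by rewrite /A; ring.
  lra.
- have -> : t * vp + (1 - t) * vq = vq - t * B by rewrite /B; ring.
  lra.
Qed.

Local Close Scope ring_scope.

Local Open Scope ring_scope.

Lemma two_real (R : realType) (T : Type) (C : set T) (f g : T -> R) (r0 r1 : R) :
  (forall t t' a, C t -> C t' -> 0 <= a <= 1 -> exists t'', [/\ C t'',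
     f t'' = a * f t + (1 - a) * f t' & g t'' = a * g t + (1 - a) * g t']) ->
  (forall t, C t -> f t <= r0 \/ g t <= r1) ->
  exists l, 0 <= l <= 1 /\ forall t, C t ->
    l * f t + (1 - l) * g t <= l * r0 + (1 - l) * r1.
Proof.
move=> Hc Hd.
case: (pselect (forall t, C t -> f t <= r0)) => [H|/existsNP[p /not_implyP[Cp]]].
  by exists 1; split; [lra|] => t Ct; rewrite subrr !mul0r !addr0 !mul1r; exact: H.
move/negP; rewrite -ltNge => fp.
case: (pselect (forall t, C t -> g t <= r1)) => [H|/existsNP[q /not_implyP[Cq]]].
  by exists 0; split; [lra|] => t Ct; rewrite subr0 !mul0r !add0r !mul1r; exact: H.
move/negP; rewrite -ltNge => gq.
have K : forall p q, C p -> r0 < f p -> C q -> r1 < g q ->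
    (g q - r1) * (f p - r0) <= (f q - r0) * (g p - r1).
  move=> p' q' Cp' fp' Cq' gq'.
  have gp' : g p' <= r1 by case: (Hd p' Cp') => //; lra.
  have fq' : f q' <= r0 by case: (Hd q' Cq') => //; lra.
  apply: key_ineq; try lra.
  move=> t ht; have [w [Cw fw gw]] := Hc p' q' t Cp' Cq' ht.
  case: (Hd w Cw); rewrite ?fw ?gw => h; [left|right]; lra.
set S := [set (g t - r1) / ((g t - r1) - (f t - r0)) | t in [set t | C t /\ r1 < g t]].
have dpos : forall t, C t -> r1 < g t -> 0 < (g t - r1) - (f t - r0).
  move=> t Ct gt; have : f t <= r0 by case: (Hd t Ct) => //; lra.
  lra.
have cpos : forall t, C t -> r0 < f t -> 0 < (f t - r0) - (g t - r1).
  move=> t Ct ft; have : g t <= r1 by case: (Hd t Ct) => //; lra.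
  lra.
have Sub : forall p, C p -> r0 < f p -> ubound S (- (g p - r1) / ((f p - r0) - (g p - r1))).
  move=> p' Cp' fp' _ [q' [Cq' gq'] <-].
  rewrite ler_pdivrMr ?dpos // mulrAC ler_pdivlMr ?cpos //.
  have := K p' q' Cp' fp' Cq' gq'; nra.
have S0 : S !=set0 by exists ((g q - r1) / ((g q - r1) - (f q - r0))), q.
have hub : has_ubound S by eexists; exact: (Sub p Cp fp).
have ubS : forall x, S x -> x <= sup S by move=> x Sx; exact: ub_le_sup.
have Sq : S ((g q - r1) / ((g q - r1) - (f q - r0))) by exists q.
have l0 : 0 <= sup S.
  apply: (le_trans _ (ubS _ Sq)).
  apply: divr_ge0; first lra; exact/ltW/dpos.
have l1 : sup S <= 1.
  apply: (le_trans (ge_sup S0 (Sub p Cp fp))).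
  rewrite ler_pdivrMr ?cpos //; lra.
exists (sup S); split; first by apply/andP.
move=> t Ct.
have e : sup S * f t + (1 - sup S) * g t - (sup S * r0 + (1 - sup S) * r1)
   = sup S * (f t - r0) + (1 - sup S) * (g t - r1) by ring.
rewrite -subr_le0 e.
case: (ltP r1 (g t)) => gt.
  have ft : f t <= r0 by case: (Hd t Ct) => //; lra.
  have := ubS _ (ex_intro2 _ _ t (conj Ct gt) erefl).
  rewrite ler_pdivrMr ?dpos //; nra.
case: (ltP r0 (f t)) => ft.
  have := ge_sup S0 (Sub t Ct ft).
  rewrite ler_pdivlMr ?cpos //; nra.
nra.
Qed.

Local Close Scope ring_scope.

Local Open Scope ring_scope.

Lemma mix_lt (R : realType) (x y : \bar R) (r0 r1 a : R) :
  (r0%:E < x)%E -> (r1%:E < y)%E -> 0 <= a <= 1 ->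
  ((a * r0 + (1 - a) * r1)%:E < a%:E * x + (1 - a)%:E * y)%E.
Proof.
move=> hx hy /andP[a0 a1].
case: (ltP 0 a) => ap; last first.
  have -> : a = 0 by apply/eqP; rewrite eq_le ap a0.
  by rewrite !mul0r !mul0e subr0 !mul1r mul1e !add0r.
rewrite EFinD !EFinM; apply: lte_leD => //.
  by rewrite lte_pmul2l.
by apply: lee_wpmul2l; [rewrite lee_fin subr_ge0 | exact: ltW].
Qed.

Lemma inf_contra (R : realType) (T : Type) (C : set T) (f g : T -> \bar R) (r0 r1 : R) :
  (forall t, C t -> (0 <= f t)%E /\ (0 <= g t)%E) ->
  (forall t t' a, C t -> C t' -> 0 <= a <= 1 -> exists t'', [/\ C t'',
     f t'' = (a%:E * f t + (1 - a)%:E * f t')%E & g t'' = (a%:E * g t + (1 - a)%:E * g t')%E]) ->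
  (forall t, C t -> (f t <= r0%:E)%E \/ (g t <= r1%:E)%E) ->
  forall t q, C t -> f t = +oo%E -> C q -> (r1%:E < g q)%E -> False.
Proof.
move=> Hn Hc Hd t q Ct ft Cq gq.
have gt : (g t <= r1%:E)%E by case: (Hd t Ct) => //; rewrite ft leNgt ltey.
have [fq0 gq0] := Hn q Cq.
have [_ gt0] := Hn t Ct.
have gtf : g t \is a fin_num.
  by rewrite ge0_fin_numE //; apply: (le_lt_trans gt); rewrite ltey.
have key : forall a, 0 < a <= 1 -> (r1%:E < (a%:E * g t + (1 - a)%:E * g q))%E -> False.
  move=> a /andP[a0 a1] h.
  have ha : 0 <= a <= 1 by rewrite (ltW a0) a1.
  have [w [Cw fw gw]] := Hc t q a Ct Cq ha.
  have fwy : f w = +oo%E.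
    have hp : (0 <= (1 - a)%:E * f q)%E by apply: mule_ge0 => //; rewrite lee_fin subr_ge0.
    rewrite fw ft gt0_muley ?lte_fin // addye //.
    by move: hp; case: ((1 - a)%:E * f q)%E.
  case: (Hd w Cw); first by rewrite fwy leNgt ltey.
  by rewrite gw leNgt h.
move: gq gq0; case E : (g q) => [z| |] // gq _.
  move: gt gt0 gtf; case E2 : (g t) => [y| |] // gt _ _.
  rewrite lte_fin in gq; rewrite lee_fin in gt.
  have zy : 0 < z - y by lra.
  set a := (z - r1) / (2 * (z - y)).
  have e : a * (2 * (z - y)) = z - r1 by rewrite /a mulfVK // gt_eqF // mulr_gt0.
  apply: (key a).
    apply/andP; split; first by rewrite /a divr_gt0 //; [lra | rewrite mulr_gt0].
    rewrite /a ler_pdivrMr ?mulr_gt0 //; lra.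
  rewrite E E2 -!EFinM -EFinD lte_fin.
  have -> : a * y + (1 - a) * z = z - (a * (2 * (z - y))) / 2 by field.
  rewrite e; lra.
apply: (key (1/2)).
  by apply/andP; split; lra.
have hp : (0 <= (1/2)%:E * g t)%E by apply: mule_ge0 => //; rewrite lee_fin; lra.
rewrite E gt0_muley ?lte_fin; last lra.
rewrite addey ?ltey //.
by move: hp; case: ((1/2)%:E * g t)%E.
Qed.

Lemma two_ereal (R : realType) (T : Type) (C : set T) (f g : T -> \bar R) (r0 r1 : R) :
  (forall t, C t -> (0 <= f t)%E /\ (0 <= g t)%E) ->
  (forall t t' a, C t -> C t' -> 0 <= a <= 1 -> exists t'', [/\ C t'',
     f t'' = (a%:E * f t + (1 - a)%:E * f t')%E & g t'' = (a%:E * g t + (1 - a)%:E * g t')%E]) ->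
  (forall t, C t -> (f t <= r0%:E)%E \/ (g t <= r1%:E)%E) ->
  exists l, 0 <= l <= 1 /\ forall t, C t ->
    (l%:E * f t + (1 - l)%:E * g t <= (l * r0 + (1 - l) * r1)%:E)%E.
Proof.
move=> Hn Hc Hd.
case: (pselect (forall t, C t -> (f t <= r0%:E)%E)) => [H|/existsNP[p /not_implyP[Cp]]].
  exists 1; split; first lra.
  by move=> t Ct; rewrite subrr !mul0e !mul0r !adde0 !addr0 !mul1e !mul1r; exact: H.
move/negP; rewrite -ltNge => fp.
case: (pselect (forall t, C t -> (g t <= r1%:E)%E)) => [H|/existsNP[q /not_implyP[Cq]]].
  exists 0; split; first lra.
  by move=> t Ct; rewrite subr0 !mul0e !mul0r !add0e !add0r !mul1e !mul1r; exact: H.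
move/negP; rewrite -ltNge => gq.
have Hd' : forall t, C t -> (g t <= r1%:E)%E \/ (f t <= r0%:E)%E.
  by move=> t Ct; case: (Hd t Ct); [right|left].
have Hc' : forall t t' a, C t -> C t' -> 0 <= a <= 1 -> exists t'', [/\ C t'',
     g t'' = (a%:E * g t + (1 - a)%:E * g t')%E & f t'' = (a%:E * f t + (1 - a)%:E * f t')%E].
  by move=> t t' a Ct Ct' ha; have [w [? ? ?]] := Hc t t' a Ct Ct' ha; exists w.
have Hn' : forall t, C t -> (0 <= g t)%E /\ (0 <= f t)%E.
  by move=> t Ct; have [? ?] := Hn t Ct.
have fin : forall t, C t -> f t \is a fin_num /\ g t \is a fin_num.
  move=> t Ct; have [ft0 gt0] := Hn t Ct.
  rewrite !ge0_fin_numE //; split; rewrite ltNge leye_eq; apply/negP => /eqP e.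
    exact: (@inf_contra R T C f g r0 r1 Hn Hc Hd t q Ct e Cq gq).
  exact: (@inf_contra R T C g f r1 r0 Hn' Hc' Hd' t p Ct e Cp fp).
have Hc1 : forall t t' a, C t -> C t' -> 0 <= a <= 1 -> exists t'', [/\ C t'',
     (fine \o f) t'' = a * (fine \o f) t + (1 - a) * (fine \o f) t' &
     (fine \o g) t'' = a * (fine \o g) t + (1 - a) * (fine \o g) t'].
  move=> t t' a Ct Ct' ha; have [w [Cw fw gw]] := Hc t t' a Ct Ct' ha.
  have [ft gt] := fin t Ct; have [ft' gt'] := fin t' Ct'.
  exists w; split => //.
    change (fine (f w) = a * fine (f t) + (1 - a) * fine (f t')).
    have -> : f w = ((a * fine (f t) + (1-a) * fine (f t'))%:E).
      by rewrite fw [in RHS]EFinD ![in RHS]EFinM !fineK.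
    reflexivity.
  change (fine (g w) = a * fine (g t) + (1 - a) * fine (g t')).
  have -> : g w = ((a * fine (g t) + (1-a) * fine (g t'))%:E).
    by rewrite gw [in RHS]EFinD ![in RHS]EFinM !fineK.
  reflexivity.
have Hd1 : forall t, C t -> (fine \o f) t <= r0 \/ (fine \o g) t <= r1.
  move=> t Ct; have [ft gt] := fin t Ct.
  case: (Hd t Ct) => h; [left|right].
    by change (fine (f t) <= r0); rewrite -lee_fin fineK.
  by change (fine (g t) <= r1); rewrite -lee_fin fineK.
have [l [hl Hl]] := @two_real R T C _ _ r0 r1 Hc1 Hd1.
exists l; split => // t Ct; have [ft gt] := fin t Ct.
by rewrite -(fineK ft) -(fineK gt) -!EFinM -EFinD lee_fin; exact: Hl.
Qed.

Local Close Scope ring_scope.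

Local Open Scope ring_scope.

Lemma open_const (X : topologicalType) (P : Prop) : open [set _ : X | P].
Proof.
case: (pselect P) => hP.
  have -> : [set _ : X | P] = setT by apply/seteqP; split => x.
  exact: openT.
have -> : [set _ : X | P] = set0 by apply/seteqP; split => x //=.
exact: open0.
Qed.

Lemma isLX0 (R : realType) (X : topologicalType) : @isLX R X (fun _ => 0%E).
Proof. by split => // r; exact: open_const. Qed.

Lemma isLX_scal (R : realType) (X : topologicalType) (a : R) (h : X -> \bar R) :
  0 <= a -> isLX h -> isLX (scal a h).
Proof.
move=> a0 [h0 ho]; split.
  by move=> x; apply: mule_ge0 => //; rewrite lee_fin.
move=> r; case: (ltP 0 a) => ap.
  have -> : [set x | (r%:E < scal a h x)%E] = [set x | ((a^-1 * r)%:E < h x)%E].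
    by apply/seteqP; split => x /=; rewrite /scal EFinM lte_pdivrMl.
  exact: ho.
have -> : a = 0 by apply/eqP; rewrite eq_le ap a0.
have -> : [set x | (r%:E < scal 0 h x)%E] = [set _ : X | (r%:E < 0)%E].
  by apply/seteqP; split => x /=; rewrite /scal mul0e.
exact: open_const.
Qed.

Lemma isLX_padd (R : realType) (X : topologicalType) (h k : X -> \bar R) :
  isLX h -> isLX k -> isLX (padd h k).
Proof.
move=> [h0 ho] [k0 ko]; split.
  by move=> x; apply: adde_ge0.
move=> r.
have -> : [set x | (r%:E < padd h k x)%E] =
   \bigcup_(s in [set: R]) ([set x | (s%:E < h x)%E] `&` [set x | ((r - s)%:E < k x)%E]).
  apply/seteqP; split => x /=; rewrite /padd.
    move=> hr; have := h0 x; have := k0 x.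
    move: hr; case E1 : (h x) => [a| |]; case E2 : (k x) => [c| |] //= hr ka ha.
    - rewrite lte_fin in hr.
      exists (a - (a + c - r) / 2) => //; split => /=. rewrite E1 lte_fin; lra.
      rewrite E2 lte_fin; lra.
    - by exists (a - 1) => //; split => /=; rewrite ?E1 ?E2 ?lte_fin ?ltey //; lra.
    - exists (r + 1) => //; split => /=; first by rewrite E1 ltey.
      by rewrite E2; apply: (lt_le_trans _ ka); rewrite lte_fin; lra.
    - by exists 0 => //; split => /=; rewrite ?E1 ?E2 ltey.
  move=> [s _ [/= hs ks]].
  have -> : r = s + (r - s) by ring.
  by rewrite EFinD; apply: lteD.
apply: bigcup_open => s _; apply: openI; [exact: ho | exact: ko].
Qed.

Lemma prev_ge0 (R : realType) (X : topologicalType) F (h : X -> \bar R) :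
  @prevision R X F -> isLX h -> (0 <= F h)%E.
Proof.
move=> [F0 Fm Fs Fh] hh.
have <- : F (scal 0 h) = 0%E by rewrite Fh // mul0e.
apply: Fm => //; first exact: isLX_scal.
by move=> x; rewrite /scal mul0e; case: hh => + _; apply.
Qed.

Lemma prev0 (R : realType) (X : topologicalType) F :
  @prevision R X F -> F (fun _ => 0%E) = 0%E.
Proof.
move=> [F0 Fm Fs Fh].
have -> : (fun _ : X => 0%E) = scal 0 (fun _ : X => 0%E : \bar R).
  by apply: funext => x; rewrite /scal mul0e.
by rewrite Fh // ?mul0e //; exact: isLX0.
Qed.

Lemma lin_comb (R : realType) (X : topologicalType) F (h0 h1 : X -> \bar R) (l : R) :
  @linear_prev R X F -> isLX h0 -> isLX h1 -> 0 <= l <= 1 ->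
  F (padd (scal l h0) (scal (1 - l) h1)) = (l%:E * F h0 + (1 - l)%:E * F h1)%E.
Proof.
move=> [[F0 Fm Fs Fh] Fa] i0 i1 /andP[l0 l1].
have l1' : 0 <= 1 - l by rewrite subr_ge0.
rewrite Fa; try exact: isLX_scal.
by rewrite !Fh.
Qed.

Local Close Scope ring_scope.

Local Open Scope ring_scope.
Local Open Scope ereal_scope.
Lemma sup_add_le (R : realType) (S1 S2 : set (\bar R)) (M : \bar R) :
  S1 !=set0 -> S2 !=set0 -> (forall x, S1 x -> 0 <= x) -> (forall y, S2 y -> 0 <= y) ->
  (forall x y, S1 x -> S2 y -> x + y <= M) -> ereal_sup S1 + ereal_sup S2 <= M.
Proof.
move=> [x0 Sx0] [y0 Sy0] p1 p2 H.
have h := adde_ge0 (p1 _ Sx0) (p2 _ Sy0).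
case EM : M => [m| |]; last first.
- by move: (le_trans h (H _ _ Sx0 Sy0)); rewrite EM.
- exact: leey.
have yfin : forall y, S2 y -> y \is a fin_num.
  move=> y Sy; rewrite ge0_fin_numE ?p2 //.
  apply: (le_lt_trans (y := m%:E)); last exact: ltey.
  rewrite -EM; apply: le_trans (H _ _ Sx0 Sy); exact: leeDr (p1 _ Sx0).
have h1 : forall y, S2 y -> ereal_sup S1 <= m%:E - y.
  move=> y Sy; apply: ge_ereal_sup => x Sx /=.
  rewrite leeBrDr ?yfin // -EM; exact: H.
have s1fin : ereal_sup S1 \is a fin_num.
  rewrite ge0_fin_numE; last exact: le_trans (p1 _ Sx0) (ereal_sup_ubound Sx0).
  apply: (le_lt_trans (h1 _ Sy0)).
  by rewrite -(fineK (yfin _ Sy0)) -EFinB ltey.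
have : ereal_sup S2 <= m%:E - ereal_sup S1.
  apply: ge_ereal_sup => y Sy /=.
  rewrite leeBrDl // -leeBrDr ?yfin //; exact: h1.
by rewrite leeBrDl.
Qed.


Lemma cc_Pb (R : realType) (X : topologicalType) (b : bullet) G G' (a : R) :
  @Pb R X b G -> Pb b G' -> (0 <= a <= 1)%R ->
  Pb b (fun h => a%:E * G h + (1 - a)%:E * G' h).
Proof.
move=> [[[G0 Gm Gs Gh] Ga] Gb] [[[G'0 G'm G's G'h] G'a] G'b] /andP[a0 a1].
have a'0 : (0 <= 1 - a)%R by rewrite subr_ge0.
have pG : prevision G by [].
have pG' : prevision G' by [].
have ea : a%:E + (1 - a)%:E = 1 by rewrite -EFinD addrC subrK.
have lin : linear_prev (fun h => a%:E * G h + (1 - a)%:E * G' h).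
  split; last first.
    move=> h k hh hk; rewrite Ga // G'a //.
    rewrite !ge0_muleDr ?prev_ge0 //; exact: addeACA.
  split.
  - by move=> h hh; rewrite G0 // G'0 // !mule0 adde0.
  - move=> h k hh hk hk'; apply: leeD; apply: lee_wpmul2l; rewrite ?lee_fin //.
      exact: Gm.
    exact: G'm.
  - move=> D hD; have [DL [d0 Dd0] Ddir] := hD.
    rewrite Gs // G's //; apply/eqP; rewrite eq_le; apply/andP; split; last first.
      apply: ge_ereal_sup => _ [d Dd <-].
      apply: leeD; apply: lee_wpmul2l; rewrite ?lee_fin //; apply: ereal_sup_ubound; by exists d.
    have ne1 : G @` D != set0 by apply/set0P; exists (G d0); exists d0.
    have ne2 : G' @` D != set0 by apply/set0P; exists (G' d0); exists d0.
    rewrite -(ereal_supZl ne1 a0) -(ereal_supZl ne2 a'0).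
    apply: sup_add_le.
    + by exists (a%:E * G d0); exists (G d0) => //; exists d0.
    + by exists ((1 - a)%:E * G' d0); exists (G' d0) => //; exists d0.
    + move=> _ [_ [d Dd <-] <-]; apply: mule_ge0; rewrite ?lee_fin //.
      exact: prev_ge0 (DL _ Dd).
    + move=> _ [_ [d Dd <-] <-]; apply: mule_ge0; rewrite ?lee_fin //.
      exact: prev_ge0 (DL _ Dd).
    + move=> _ _ [_ [d1 Dd1 <-] <-] [_ [d2 Dd2 <-] <-].
      have [d3 [Dd3 l13 l23]] := Ddir d1 d2 Dd1 Dd2.
      apply: (le_trans _ (ereal_sup_ubound (ex_intro2 _ _ d3 Dd3 erefl))).
      apply: leeD; apply: lee_wpmul2l; rewrite ?lee_fin //.
        by apply: Gm => //; apply: DL.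
      by apply: G'm => //; apply: DL.
  - move=> k h k0 hh; rewrite Gh // G'h //.
    rewrite muleCA (muleCA (1 - a)%:E) ge0_muleDr //; apply: mule_ge0;
      rewrite ?lee_fin // prev_ge0 //.
split => //.
case: b Gb G'b => // Gb G'b.
- move=> h hh.
  apply: (le_trans (leeD (lee_wpmul2l _ (Gb h hh)) (lee_wpmul2l _ (G'b h hh)))); rewrite ?lee_fin //.
  rewrite !ge0_muleDr ?prev_ge0 // !mule1 addeACA ea; exact: le_refl.
- move=> h hh.
  rewrite Gb // G'b // !ge0_muleDr ?prev_ge0 // !mule1 addeACA ea.
by [].
Qed.

Local Close Scope ereal_scope.
Local Close Scope ring_scope.

Local Open Scope ring_scope.

Lemma sep (R : realType) (X : topologicalType) (b : bullet)
  (s : seq ((X -> \bar R) * R)) : forall (C : set ((X -> \bar R) -> \bar R)),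
  C `<=` @Pb R X b -> prev_convex C -> (forall p, p \in s -> isLX p.1) ->
  (forall G', C G' -> exists2 p, p \in s & (G' p.1 <= p.2%:E)%E) ->
  exists h, exists r : R, [/\ isLX h, forall G', C G' -> (G' h <= r%:E)%E &
     forall G, linear_prev G -> (forall p, p \in s -> (p.2%:E < G p.1)%E) -> (r%:E < G h)%E].
Proof.
elim: s => [|[h0 r0] s IH] C HCP HCc Hs Hex.
  exists (fun _ => 0%E), (-1); split.
  - exact: isLX0.
  - by move=> G' CG'; have [p] := Hex G' CG'; rewrite in_nil.
  - by move=> G [[? ? ? ?] _] _; rewrite prev0 // lte_fin; lra.
have i0 : isLX h0 by apply: (Hs (h0, r0)); rewrite mem_head.
set C' := [set G' | C G' /\ (r0%:E < G' h0)%E].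
have [h1 [r1 [i1 Hb1 Ht1]]] : exists h, exists r : R, [/\ isLX h, forall G', C' G' -> (G' h <= r%:E)%E &
     forall G, linear_prev G -> (forall p, p \in s -> (p.2%:E < G p.1)%E) -> (r%:E < G h)%E].
  apply: IH.
  - by move=> G' [CG' _]; exact: HCP.
  - move=> G G' a [CG hG] [CG' hG'] ha; split; first exact: HCc.
    have := @mix_lt R _ _ r0 r0 a hG hG' ha.
    by have -> : a * r0 + (1 - a) * r0 = r0 by ring.
  - by move=> p ps; apply: Hs; rewrite in_cons ps orbT.
  - move=> G' [CG' hG']; have [p] := Hex G' CG'.
    rewrite in_cons => /orP[/eqP -> /=|ps hp]; last by exists p.
    by rewrite leNgt hG'.
have Hn : forall G, C G -> (0 <= G h0)%E /\ (0 <= G h1)%E.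
  move=> G CG; have [[pG _] _] := HCP G CG; split; exact: prev_ge0.
have Hc : forall G G' a, C G -> C G' -> 0 <= a <= 1 -> exists t'', [/\ C t'',
     t'' h0 = (a%:E * G h0 + (1 - a)%:E * G' h0)%E & t'' h1 = (a%:E * G h1 + (1 - a)%:E * G' h1)%E].
  move=> G G' a CG CG' ha; exists (fun h => (a%:E * G h + (1 - a)%:E * G' h)%E); split => //.
  exact: HCc.
have Hd : forall G, C G -> (G h0 <= r0%:E)%E \/ (G h1 <= r1%:E)%E.
  move=> G CG; case: (ltP (r0%:E) (G h0)) => h; [right|left] => //.
  exact: Hb1.
have [l [hl Hl]] := @two_ereal R _ C (fun G => G h0) (fun G => G h1) r0 r1 Hn Hc Hd.
have [l0 l1] : 0 <= l /\ 0 <= 1 - l by move: hl => /andP[? ?]; split => //; rewrite subr_ge0.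
exists (padd (scal l h0) (scal (1 - l) h1)), (l * r0 + (1 - l) * r1); split.
- by apply: isLX_padd; apply: isLX_scal.
- move=> G CG; have [lG _] := HCP G CG.
  rewrite lin_comb //; exact: Hl.
- move=> G lG Hp; rewrite lin_comb //; apply: mix_lt => //.
    by apply: (Hp (h0, r0)); rewrite mem_head.
  by apply: Ht1 => // p ps; apply: Hp; rewrite in_cons ps orbT.
Qed.

Local Close Scope ring_scope.



Lemma ereal_between (R : realType) (x y : \bar R) :
  (x < y)%E -> exists r : R, (x < r%:E)%E /\ (r%:E < y)%E.
Proof.
case: x => [a| |]; case: y => [c| |] //=.
- by rewrite lte_fin => h; exists ((a + c) / 2)%R; rewrite !lte_fin; split; lra.
- by move=> _; exists (a + 1)%R; rewrite ltey lte_fin; split => //; lra.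
- by move=> _; exists (c - 1)%R; rewrite ltNye lte_fin; split => //; lra.
- by move=> _; exists 0%R; rewrite ltNye ltey.
Qed.

Theorem proposition4p19 (R : realType) (X : topologicalType) (b : bullet)
  (HX : AP_friendly_b R X b) (A : set ((X -> \bar R) -> \bar R)) :
  A !=set0 -> wk_closed b A ->
  [/\ wk_closed b (s_AP b (r_AP A)), prev_convex (s_AP b (r_AP A)),
      A `<=` s_AP b (r_AP A) &
      forall C, wk_closed b C -> prev_convex C -> A `<=` C ->
        s_AP b (r_AP A) `<=` C].
Proof.
move=> [G0 AG0] [Asub Aopen].
set F := r_AP A.
split.
- split; first by move=> G [].
  split; first by move=> G [].
  move=> G [PG nS].
  have [h [hh hlt]] : exists h, isLX h /\ (F h < G h)%E.
    case: (pselect (exists h, isLX h /\ (F h < G h)%E)) => // nex.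
    exfalso; apply: nS; split => // h hh; rewrite leNgt; apply/negP => lt.
    by apply: nex; exists h.
  have [r [Fr rG]] := ereal_between _ _ _ hlt.
  exists [:: (h, r)]; split.
  + by move=> p; rewrite inE => /eqP ->.
  + by move=> p; rewrite inE => /eqP ->.
  + move=> G' PG' hp; split => // -[_ H'].
    have := H' h hh; have := hp (h, r) (mem_head _ _) => /= rG'.
    by rewrite leNgt (lt_trans Fr rG').
- move=> G G' a [PG HG] [PG' HG'] ha; split; first exact: cc_Pb.
  move=> h hh; move: ha => /andP[a0 a1].
  have a'0 : (0 <= 1 - a)%R by rewrite subr_ge0.
  have ea : (a%:E + (1 - a)%:E = 1)%E by rewrite -EFinD addrC subrK.
  apply: (le_trans (leeD (lee_wpmul2l _ (HG h hh)) (lee_wpmul2l _ (HG' h hh)))); rewrite ?lee_fin //.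
  by rewrite -ge0_muleDl ?lee_fin // ea mul1e.
- move=> G AG; split; first exact: Asub.
  by move=> h hh; apply: ereal_sup_ubound; exists G.
move=> C [Csub [_ Copen]] Cconv AC G [PG HG].
case: (pselect (C G)) => // nCG; exfalso.
have [s [sLX sG sU]] := Copen G (conj PG nCG).
have Hex : forall G', C G' -> exists2 p, p \in s & (G' p.1 <= p.2%:E)%E.
  move=> G' CG'; case: (pselect (exists2 p, p \in s & (G' p.1 <= p.2%:E)%E)) => // nex.
  exfalso.
  have : (Pb b `\` C) G'.
    apply: sU; first exact: Csub.
    move=> p ps; rewrite ltNge; apply/negP => hle; apply: nex; by exists p.
  by case.
have [h [r [hh Hb Ht]]] := @sep R X b s C Csub Cconv sLX Hex.
have hlt := Ht G PG.1 sG.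
have hle : (G h <= r%:E)%E.
  apply: le_trans (HG h hh) _.
  by apply: ge_ereal_sup => _ [G' AG' <-]; apply: Hb; exact: AC.
by move: hlt; rewrite ltNge hle.
Qed.
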